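(* Suppose $(P,n,a,b)$ is good. Let $m$ be the minimal integer $m\ge n+1$ such that $Q(x)=P(x)-x^m$ satisfies $Q(x)>0$ for all $x\in[a,b]$. Then $(Q,m,a,b)$ is good.
   Context: Let $\mathcal{B}_n$ be the set of polynomials $1+\sum_{k=1}^n a_kx^k$ with $a_k\in\{-1,0,1\}$. A quadruple $(P,n,a,b)$ is called good if $P\in\mathcal{B}_n$, $0.5<a<b<1$, $P(a)>a^{n+1}/(1-a)$, $P(b)>b^{n+1}/(1-b)$, $P(x)>0$ for all $x\in[a,b]$, and there exists $x\in(a,b)$ with $P(x)<x^{n+1}/(1-x)$. *)

(* Defs.v *)
From HB Require Import structures.
From mathcomp Require Import all_boot all_order all_algebra.
From mathcomp Require Import reals.
Set Implicit Arguments. Unset Strict Implicit. Unset Printing Implicit Defensive.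
Import Order.TTheory GRing.Theory Num.Theory.
Local Open Scope ring_scope.

Definition in_B (R : realType) (n : nat) (P : {poly R}) : Prop :=
  P`_0 = 1 /\
  (forall k : nat, (1 <= k <= n)%N -> [|| P`_k == -1, P`_k == 0 | P`_k == 1]) /\
  (forall k : nat, (n < k)%N -> P`_k = 0).

Definition good (R : realType) (P : {poly R}) (n : nat) (a b : R) : Prop :=
  in_B n P /\
  (2^-1 < a /\ a < b /\ b < 1) /\
  a ^+ n.+1 / (1 - a) < P.[a] /\
  b ^+ n.+1 / (1 - b) < P.[b] /\
  (forall x : R, a <= x <= b -> 0 < P.[x]) /\
  (exists x : R, a < x < b /\ P.[x] < x ^+ n.+1 / (1 - x)).

Definition pos_on (R : realType) (Q : {poly R}) (a b : R) : Prop :=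
  forall x : R, a <= x <= b -> 0 < Q.[x].

(* Main.v *)
Require Import Defs.
From HB Require Import structures.
From mathcomp Require Import all_boot all_order all_algebra.
From mathcomp Require Import reals.
From mathcomp Require Import ring lra.
From Stdlib Require Classical_Prop.
Import Order.TTheory GRing.Theory Num.Theory.
Local Open Scope ring_scope.

Lemma keyineq (R : realType) (x : R) k :
  2^-1 < x -> x < 1 -> x ^+ k < x ^+ k.+1 / (1 - x).
Proof.
move=> h1 h2.
have h3 : 1 < 2 * x.
  have := h1; rewrite -(ltr_pM2l (_ : 0 < 2)) ?mulfV //; lra.
have hx : 0 < x by lra.
have t0 : 0 < x ^+ k by rewrite exprn_gt0.
rewrite ltr_pdivlMr ?subr_gt0 // exprS; nra.
Qed.

Lemma endpt (R : realType) (x p : R) n m :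
  2^-1 < x -> x < 1 -> (n.+1 <= m)%N -> x ^+ n.+1 / (1 - x) < p ->
  x ^+ m.+1 / (1 - x) < p - x ^+ m.
Proof.
move=> h1 h2 hm hp.
have hx : 0 < x.
  apply: lt_trans h1; rewrite invr_gt0; lra.
have hx1 : 1 - x != 0 by rewrite subr_eq0 eq_sym lt_eqF.
have e : x ^+ m.+1 / (1 - x) + x ^+ m = x ^+ m / (1 - x).
  rewrite exprS; field; exact: hx1.
have hle : x ^+ m <= x ^+ n.+1.
  by rewrite ler_wiXn2l // ?ltW.
have hle2 : x ^+ m / (1 - x) <= x ^+ n.+1 / (1 - x).
  by rewrite ler_pM2r // invr_gt0 subr_gt0.
lra.
Qed.

Lemma iden (R : realType) (x : R) m : x < 1 ->
  x ^+ m.+1 / (1 - x) + x ^+ m = x ^+ m / (1 - x).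
Proof.
move=> h; have hx1 : 1 - x != 0 by rewrite subr_eq0 eq_sym lt_eqF.
rewrite exprS; field; exact: hx1.
Qed.

Theorem lemma3p1 (R : realType) (P : {poly R}) (n : nat) (a b : R) (m : nat) :
  good P n a b ->
  (n.+1 <= m)%N ->
  pos_on (P - 'X^m) a b ->
  (forall k : nat, (n.+1 <= k < m)%N -> ~ pos_on (P - 'X^k) a b) ->
  good (P - 'X^m) m a b.
Proof.
move=> [[HB0 [HBc HBz]] [[ha [hab hb]] [Pa [Pb [Ppos [x0 [hx0 Px0]]]]]]] hm Qpos Hmin.
have ev : forall x, (P - 'X^m).[x] = P.[x] - x ^+ m.
  by move=> x; rewrite hornerD hornerN hornerXn.
have Ea : a ^+ m.+1 / (1 - a) < P.[a] - a ^+ m by apply: (@endpt _ a _ n m ha _ hm Pa); lra.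
have Eb : b ^+ m.+1 / (1 - b) < P.[b] - b ^+ m by apply: (@endpt _ b _ n m _ hb hm Pb); lra.
split; [|split; [by split|split; [by rewrite ev|split; [by rewrite ev|split; [exact: Qpos|]]]]].
- split; [|split].
  + rewrite coefB coefXn HB0; have -> : (0 == m)%N = false by case: (m) hm.
    by rewrite subr0.
  + move=> k /andP[k1 km]; rewrite coefB coefXn.
    case: (ltnP n k) => hnk.
      rewrite HBz // sub0r; case: (k =P m) => _.
        by rewrite mulr1n eqxx.
      by rewrite mulr0n oppr0 eqxx orbT.
    have -> : (k == m) = false by apply/negbTE; rewrite neq_ltn (leq_ltn_trans hnk hm).
    by rewrite subr0; apply: HBc; rewrite k1 hnk.
  + move=> k hk; have hnk : (n < k)%N by exact: ltn_trans hm hk.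
    rewrite coefB coefXn HBz //.
    by rewrite (gtn_eqF hk) subr0.
- case: (ltngtP n.+1 m) => [hlt|hgt|heq].
  + destruct m as [|k0]; first by [].
    apply: Classical_Prop.NNPP => Hn.
    apply: (Hmin k0); first by rewrite ltnSn andbT.
    move=> x /andP[hax hxb].
    rewrite hornerD hornerN hornerXn.
    rewrite ltNge; apply/negP => hle.
    have hx1 : 2^-1 < x by lra.
    have hx2 : x < 1 by lra.
    have K := @keyineq _ x k0 hx1 hx2.
    have I := @iden _ x k0.+1 hx2.
    have Ex : P.[x] - x ^+ k0.+1 < x ^+ k0.+2 / (1 - x) by lra.
    apply: Hn; exists x; split => //.
    rewrite !lt_neqAle hax hxb !andbT; apply/andP; split.
      by apply/eqP => e; subst x; lra.
    by apply/eqP => e; subst x; lra.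
    by rewrite ev; lra.
  + by move: hgt; rewrite ltnNge hm.
  + exists x0; split => //; rewrite ev -heq.
    move: hx0 => /andP[h1 h2].
    have := @iden _ x0 n.+1 (_ : x0 < 1); lra.
Qed.
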